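(* Let $(x,y,C)\in Q(r)$ with $r\ge5$, let $d(j_1,j_2):=1-y_{j_1,j_2}$, fix $j^*\in J$ and $0<\beta<1$, and put $U:=\{j\in J: d(j,j^* )\le\beta\}$. Then $|U|\le\frac{c}{1-\beta}$.
   Context: Fix a finite set $J$ of jobs, a partial order $\prec$ on $J$, and $c,S,m\in\mathbb N$. Sherali–Adams lift: for a polytope $K=\{x\in\mathbb R^{V}:Ax\ge b\}$ on a finite index set $V$ and $r\ge0$, $SA_r(K)$ is the set of vectors $y$ indexed by subsets of $V$ of size at most $r+1$ with $y_\emptyset=1$ and, for every row $\ell$ and all $I,J'\subseteq V$ with $|I|+|J'|\le r$, $\sum_{H\subseteq J'}(-1)^{|H|}\big(\sum_{v\in V}A_{\ell,v}y_{I\cup H\cup\{v\}}-b_\ell y_{I\cup H}\big)\ge0$. Scheduling LP: let $V=J\times[m]\times\{0,\dots,S-1\}$ and let $K\subseteq\mathbb R^V$ be the set of $x$ with $\sum_{i\in[m]}\sum_{s}x_{j,i,s}=1$ for all $j\in J$, $\sum_{j\in J}x_{j,i,s}\le c$ for all $i,s$, and $0\le x_{j,i,s}\le1$. For $x\in SA_r(K)$ write $x_{j,i,s}=x_{\{(j,i,s)\}}$ and $x_{(j_1,i_1,s_1),(j_2,i_2,s_2)}=x_{\{(j_1,i_1,s_1),(j_2,i_2,s_2)\}}$. $Q(r)$ is the set of triples $(x,y,C)$ with $x\in SA_r(K)$, $y\in\mathbb R^{J\times J}$, $C\in\mathbb R^J$ satisfying $y_{j_1,j_2}=\sum_{s=0}^{S-1}\sum_{i\in[m]}x_{(j_1,i,s),(j_2,i,s)}$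 for all $j_1,j_2\in J$, $C_{j_2}\ge C_{j_1}+(1-y_{j_1,j_2})$ for all $j_1\prec j_2$, and $C_j\ge0$ for all $j$. *)

(* Defs.v *)
From HB Require Import structures.
From mathcomp Require Import all_boot all_order all_algebra.
Set Implicit Arguments. Unset Strict Implicit. Unset Printing Implicit Defensive.
Import Order.TTheory GRing.Theory Num.Theory.
Local Open Scope ring_scope.

(* Generic Sherali-Adams lift of K = {x : A x >= b}, rows indexed by [Row].
   Vectors y are indexed by subsets of V; only values on sets of size <= r+1
   are ever constrained. *)
Definition SA (R : numDomainType) (V : finType) (Row : Type)
  (A : Row -> V -> R) (b : Row -> R) (r : nat) (y : {set V} -> R) : Prop :=
  y set0 = 1 /\
  forall (l : Row) (I J' : {set V}), (#|I| + #|J'| <= r)%N ->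
    0 <= \sum_(H in powerset J')
           (-1) ^+ #|H| * (\sum_(v : V) A l v * y (I :|: H :|: [set v])
                           - b l * y (I :|: H)).

Definition SV (J : finType) (m S : nat) : finType := ((J * 'I_m) * 'I_S)%type.

Inductive srow (J : finType) (m S : nat) : Type :=
| AssignGe of J                 (*  sum_{i,s} x_{j,i,s} >= 1 *)
| AssignLe of J                 (* -sum_{i,s} x_{j,i,s} >= -1 *)
| CapRow of 'I_m & 'I_S         (* -sum_j x_{j,i,s} >= -c *)
| NonNeg of SV J m S            (*  x_v >= 0 *)
| AtMost1 of SV J m S.          (* -x_v >= -1 *)

Definition schedA (R : numDomainType) (J : finType) (m S : nat)
  (l : srow J m S) (v : SV J m S) : R :=
  match l with
  | AssignGe j => if v.1.1 == j then 1 else 0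
  | AssignLe j => if v.1.1 == j then -1 else 0
  | CapRow i s => if (v.1.2 == i) && (v.2 == s) then -1 else 0
  | NonNeg w => if v == w then 1 else 0
  | AtMost1 w => if v == w then -1 else 0
  end.

Definition schedb (R : numDomainType) (J : finType) (m S : nat) (c : nat)
  (l : srow J m S) : R :=
  match l with
  | AssignGe _ => 1
  | AssignLe _ => -1
  | CapRow _ _ => - (c%:R)
  | NonNeg _ => 0
  | AtMost1 _ => -1
  end.

Definition SA_K (R : numDomainType) (J : finType) (c S m r : nat)
  (x : {set SV J m S} -> R) : Prop :=
  SA (@schedA R J m S) (@schedb R J m S c) r x.

Definition Qr (R : numDomainType) (J : finType) (prec : rel J) (c S m r : nat)
  (x : {set SV J m S} -> R) (y : J -> J -> R) (C : J -> R) : Prop :=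
  [/\ SA_K c r x,
      (forall j1 j2 : J, y j1 j2 =
         \sum_(s < S) \sum_(i < m) x [set ((j1, i), s); ((j2, i), s)]),
      (forall j1 j2 : J, prec j1 j2 -> C j2 >= C j1 + (1 - y j1 j2))
    & (forall j : J, C j >= 0)].

Definition strict_porder (J : finType) (prec : rel J) : Prop :=
  irreflexive prec /\ transitive prec.

Arguments Qr {R J} prec c S m r x y C.

(* Main.v *)
Require Import Defs.
From HB Require Import structures.
From mathcomp Require Import all_boot all_order all_algebra.
From mathcomp Require Import reals.
Import Order.TTheory GRing.Theory Num.Theory.
Local Open Scope ring_scope.

Lemma sumSV (R : numDomainType) (J : finType) m S (F : SV J m S -> R) :
  \sum_v F v = \sum_(j : J) \sum_(i < m) \sum_(s < S) F ((j,i),s).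
Proof.
rewrite pair_big /= pair_big /=; apply: eq_bigr => -[[j i] s] //.
Qed.

Lemma SA0 {R : numDomainType} {J : finType} {c S m r : nat} {x : {set SV J m S} -> R} (l : srow J m S) (I : {set SV J m S}) :
  SA_K c r x -> (#|I| <= r)%N ->
  0 <= \sum_v schedA R l v * x (I :|: [set v]) - schedb R c l * x I.
Proof.
move=> [_ h] hI; have := h l I set0; rewrite cards0 addn0 => /(_ hI).
by rewrite powerset0 big_set1 cards0 expr0 mul1r !setU0.
Qed.

Lemma sum_if1 {R : numDomainType} {T : finType} (a : T) (G : T -> R) :
  \sum_(k : T) (if k == a then G k else 0) = G a.
Proof. by rewrite -big_mkcond big_pred1_eq. Qed.

Lemma ifmulN {R : numDomainType} (b : bool) (X : R) :
  (if b then -1 else 0) * X = - (if b then X else 0).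
Proof. by case: b; rewrite ?mulN1r ?mul0r ?oppr0. Qed.

Lemma ifmul1 {R : numDomainType} (b : bool) (X : R) :
  (if b then 1 else 0) * X = (if b then X else 0).
Proof. by case: b; rewrite ?mul1r ?mul0r. Qed.

Theorem mainTheorem10 (R : realType) (J : finType) (prec : rel J)
  (c S m r : nat) (x : {set SV J m S} -> R) (y : J -> J -> R) (C : J -> R) :
  strict_porder prec ->
  Qr prec c S m r x y C ->
  (5 <= r)%N ->
  forall (jstar : J) (beta : R), 0 < beta -> beta < 1 ->
  (#|[set j : J | 1 - y j jstar <= beta]|)%:R <= c%:R / (1 - beta).
Proof.
move=> _ [hSA hy _ _] hr jstar beta hb0 hb1.
have hr1 : forall w : SV J m S, (#|[set w]| <= r)%N.
  by move=> w; rewrite cards1; apply: leq_trans hr.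
have F1 : \sum_(s < S) \sum_(i < m) x [set ((jstar,i),s)] <= 1.
  have := SA0 (@AssignLe J m S jstar) set0 hSA (ltac:(by rewrite cards0) : (#|@set0 (SV J m S)| <= r)%N).
  move: hSA => [hx0 _]; rewrite hx0 /= mulr1 sumSV => H.
  have E : \sum_(j : J) \sum_(i < m) \sum_(s < S)
     (if ((j, i), s).1.1 == jstar then -1 else 0) * x (set0 :|: [set ((j, i), s)])
     = - \sum_(s < S) \sum_(i < m) x [set ((jstar,i),s)].
    rewrite (bigD1 jstar) //= [X in _ + X]big1 => [|j hj]; last first.
      by apply: big1 => i _; apply: big1 => s _; rewrite /= (negbTE hj) mul0r.
    rewrite addr0 exchange_big -sumrN; apply: eq_bigr => s _; rewrite -sumrN.
    by apply: eq_bigr => i _; rewrite eqxx mulN1r set0U.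
  by rewrite E opprK addrC subr_ge0 in H.
have F2 : forall (i : 'I_m) (s : 'I_S),
    \sum_(j : J) x [set ((j,i),s); ((jstar,i),s)] <= c%:R * x [set ((jstar,i),s)].
  move=> i s; have := SA0 (@CapRow J m S i s) [set ((jstar,i),s)] hSA (hr1 ((jstar,i),s)).
  rewrite /= sumSV => H.
  have E : \sum_(j : J) \sum_(i' < m) \sum_(s' < S)
     (if (((j, i'), s').1.2 == i) && (((j, i'), s').2 == s) then -1 else 0)
        * x ([set ((jstar,i),s)] :|: [set ((j, i'), s')])
     = - \sum_(j : J) x [set ((j,i),s); ((jstar,i),s)].
    rewrite -sumrN; apply: eq_bigr => j _.
    rewrite (bigD1 i) //= [X in _ + X]big1 => [|i' hi']; last first.
      by apply: big1 => s' _; rewrite /= (negbTE hi') mul0r.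
    rewrite addr0 (bigD1 s) //= [X in _ + X]big1 => [|s' hs']; last first.
      by rewrite (negbTE hs') andbF mul0r.
    by rewrite addr0 !eqxx mulN1r setUC.
  by rewrite E mulNr opprK addrC subr_ge0 in H.
have F3 : forall (j : J) (i : 'I_m) (s : 'I_S),
    0 <= x [set ((j,i),s); ((jstar,i),s)].
  move=> j i s; have := SA0 (NonNeg ((j,i),s)) [set ((jstar,i),s)] hSA (hr1 ((jstar,i),s)).
  rewrite /= mul0r subr0.
  under eq_bigr => v _ do rewrite ifmul1.
  by rewrite (sum_if1 ((j,i),s) (fun v => x ([set ((jstar, i), s)] :|: [set v]))) setUC.
have hyn : forall j, 0 <= y j jstar.
  move=> j; rewrite hy; apply: sumr_ge0 => s _; apply: sumr_ge0 => i _; exact: F3.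
have hbp : 0 < 1 - beta by rewrite subr_gt0.
rewrite ler_pdivlMr //.
set U := [set j | 1 - y j jstar <= beta].
have h1 : #|U|%:R * (1 - beta) <= \sum_(j in U) y j jstar.
  rewrite mulrC mulr_natr -sumr_const.
  apply: ler_sum => j; rewrite inE => H; rewrite lerBlDr addrC -lerBlDr //.
have h2 : \sum_(j in U) y j jstar <= \sum_j y j jstar.
  rewrite [X in _ <= X](bigID (fun j => j \in U)) /= lerDl.
  by apply: sumr_ge0 => j _; exact: hyn.
have h3 : \sum_j y j jstar <= c%:R.
  under eq_bigr => j _ do rewrite hy.
  rewrite exchange_big /=.
  under eq_bigr => s _ do rewrite exchange_big /=.
  apply: (@le_trans _ _ (\sum_(s < S) \sum_(i < m) c%:R * x [set ((jstar,i),s)])).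
    by apply: ler_sum => s _; apply: ler_sum => i _; exact: F2.
  under eq_bigr => s _ do rewrite -mulr_sumr.
  rewrite -mulr_sumr -[X in _ <= X]mulr1; apply: ler_wpM2l => //.
by apply: le_trans h1 (le_trans h2 h3).
Qed.
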